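(* Let $X$ be a batch of $S(H)$ and $(v,w)$ an edge of $H$ with $e(v,w)$ occurring in $X$; let $(v,y)$ be the edge that cyclicly precedes $(v,w)$. If $e(v,w)$ is immediately preceded in $X$ by $e(v,y)$, then the segment of $X$ occupied by $e(v,w)$ is exactly one phrase of the LZ77 parsing of $X$; if $e(v,w)$ is immediately preceded by $s(v)$, it is the union of exactly two phrases; in every other case (including when $e(v,w)$ is the first string of $X$), it is the union of at least two phrases.
   Context: $H$ is a directed graph without loops in which no vertex has outdegree exactly 1. For each vertex $v$ introduce three symbols $v$, $v'$, $\$_v$; all these symbols are pairwise distinct (over all vertices). For a vertex $v$ with outdegree $d=d(v)\ge 1$, let $w_0,\dots,w_{d-1}$ be its out-neighbors in a fixed cyclic order (indices mod $d$); the edge $(v,w_{i-1})$ cyclicly precedes $(v,w_i)$. Define $e(v,w_i)=(v'w_{i-1})^4v'w_i$ for $0\le i<d$ and $s(v)=v^4(v')^5\$_v$. $S(H)$ is the set of all strings $s(v)$ ($v$ a vertex) and $e(v,w)$ ($(v,w)$ an edge). A batch is a sequence of distinct elements of $S(H)$, identified with their concatenation; a schedule is a partition of $S(H)$ into batches. LZ77 parsing of a string $z$: $z=z_1z_2\cdots z_t$ where, once $z_1,\dots,z_{i-1}$ are determined and the remaining suffix is nonempty, $z_i$ is the longest nonempty prefix $u$ of the remaining suffix such that $u^-$ ($u$ with its last symbol deleted) has an occurrence in $z$ starting at a position strictly smaller than the starting position of $u$ (the empty string always qualifies). The $z_i$ are the phrases; $|\mathcal C(z)|=t$ is the number of phrases.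 *)

(* Defs.v *)
From mathcomp Require Import all_boot.
Set Implicit Arguments. Unset Strict Implicit. Unset Printing Implicit Defensive.

(* A symbol is a pair (v, tag): tag 0 = the symbol v, tag 1 = v', tag 2 = $_v.
   All these symbols are pairwise distinct over all vertices. *)
Definition sym (V : finType) := (V * nat)%type.
Definition sbase  {V : finType} (v : V) : sym V := (v, 0).
Definition sprime {V : finType} (v : V) : sym V := (v, 1).
Definition sdollar {V : finType} (v : V) : sym V := (v, 2).

(* ---------- the graph H ----------
   Vertices: a finite type V.  [adj v] lists the out-neighbours w_0,...,w_{d-1}
   of v in their fixed cyclic order; the edges are the (v,w) with w \in adj v. *)
Definition graph_ok (V : finType) (adj : V -> seq V) : Prop :=
  (forall v, uniq (adj v)) /\
  (forall v, v \notin adj v) /\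
  (forall v, size (adj v) != 1).

(* cyclic predecessor: for w = w_i, returns w_{i-1} (indices mod d) *)
Definition cpred (V : finType) (adj : V -> seq V) (v w : V) : V :=
  let d := size (adj v) in
  nth v (adj v) ((index w (adj v) + d).-1 %% d).

(* e(v,w_i) = (v' w_{i-1})^4 v' w_i *)
Definition e_str (V : finType) (adj : V -> seq V) (v w : V) : seq (sym V) :=
  flatten (nseq 4 [:: sprime v; sbase (cpred adj v w)]) ++ [:: sprime v; sbase w].

Definition s_str (V : finType) (v : V) : seq (sym V) :=
  nseq 4 (sbase v) ++ nseq 5 (sprime v) ++ [:: sdollar v].

Definition inSH (V : finType) (adj : V -> seq V) (s : seq (sym V)) : Prop :=
  (exists v, s = s_str v) \/ (exists v w, w \in adj v /\ s = e_str adj v w).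

(* A batch: a sequence of distinct elements of S(H) (identified with its
   concatenation [flatten X]). *)
Definition is_batch (V : finType) (adj : V -> seq V) (X : seq (seq (sym V))) : Prop :=
  uniq X /\ (forall s, s \in X -> inSH adj s).

Section LZ.
Variable T : eqType.

(* [l] qualifies as the length of the phrase starting at position [i] of [z]:
   u = z[i, i+l) and u^- (length l-1) has an occurrence in z starting at some
   position j < i; the empty string (l = 1) always qualifies. *)
Definition lz_qualifies (z : seq T) (i l : nat) : bool :=
  (l == 1) ||
  has (fun j => (j + l.-1 <= size z) &&
                (take l.-1 (drop j z) == take l.-1 (drop i z))) (iota 0 i).

Definition lz_len (z : seq T) (i : nat) : nat :=
  \max_(1 <= l < (size z - i).+1 | lz_qualifies z i l) l.

Fixpoint lz_starts_from (z : seq T) (i fuel : nat) : seq nat :=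
  if fuel is n.+1 then
    if i < size z then i :: lz_starts_from z (i + lz_len z i) n else [::]
  else [::].

Definition lz_starts (z : seq T) : seq nat := lz_starts_from z 0 (size z).

Definition lz_phrases (z : seq T) : seq (seq T) :=
  [seq take (lz_len z i) (drop i z) | i <- lz_starts z].
Definition lz_count (z : seq T) : nat := size (lz_phrases z).

Definition lz_boundary (z : seq T) (p : nat) : bool :=
  (p \in lz_starts z) || (p == size z).

Definition lz_union_of (z : seq T) (a b k : nat) : Prop :=
  a <= b /\ lz_boundary z a /\ lz_boundary z b /\
  count (fun p => a <= p < b) (lz_starts z) = k.
End LZ.

(* Main.v *)
Require Import Defs.
From mathcomp Require Import all_boot zify.

Section Gen.
Variable T : eqType.
Implicit Types z : seq T.

Lemma eq_take_drop (x0 : T) z j q n :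
  j + n <= size z -> q + n <= size z ->
  (forall k, k < n -> nth x0 z (j + k) = nth x0 z (q + k)) ->
  take n (drop j z) = take n (drop q z).
Proof.
move=> Hj Hq H; apply: (@eq_from_nth _ x0).
  by rewrite !size_takel // size_drop; lia.
move=> k; rewrite size_takel ?size_drop; last by lia.
move=> Hkn.
by rewrite !nth_take // !nth_drop H.
Qed.

Lemma eq_take_drop_inv (x0 : T) z j q n :
  take n (drop j z) = take n (drop q z) ->
  forall k, k < n -> nth x0 z (j + k) = nth x0 z (q + k).
Proof.
move=> H k Hk; rewrite -!nth_drop -(nth_take x0 Hk) H nth_take //.
Qed.

Lemma qual_intro (x0 : T) z i l j :
  j < i -> j + l.-1 <= size z -> i + l.-1 <= size z ->
  (forall k, k < l.-1 -> nth x0 z (j + k) = nth x0 z (i + k)) ->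
  lz_qualifies z i l.
Proof.
move=> Hji Hj Hi H; rewrite /lz_qualifies; apply/orP; right; apply/hasP; exists j.
  by rewrite mem_iota.
by rewrite Hj /=; apply/eqP; apply: (eq_take_drop x0).
Qed.

Lemma qual_elim (x0 : T) z i l :
  1 < l -> lz_qualifies z i l ->
  exists j, [/\ j < i, j + l.-1 <= size z &
    forall k, k < l.-1 -> nth x0 z (j + k) = nth x0 z (i + k)].
Proof.
move=> Hl; rewrite /lz_qualifies => /orP [/eqP El|]; first by move: Hl; rewrite El.
case/hasP=> j; rewrite mem_iota => /andP [_ Hji] /andP [Hj /eqP E].
exists j; split; [lia | done | exact: eq_take_drop_inv].
Qed.

Lemma qual_closed z i l l' :
  lz_qualifies z i l -> 0 < l' <= l -> lz_qualifies z i l'.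
Proof.
rewrite /lz_qualifies => /orP [/eqP El|]; first by move=> Hl; apply/orP; left; lia.
case/hasP=> j Hj /andP [Hs /eqP E] Hl'.
case: (eqVneq l' 1) => [->|_]; first by [].
apply/orP; right; apply/hasP; exists j => //.
apply/andP; split; first by lia.
have Hle : l'.-1 <= l.-1 by lia.
by rewrite -(minn_idPl Hle) !take_min E.
Qed.

Lemma len_ub z q M : ~~ lz_qualifies z q M.+1 -> lz_len z q <= M.
Proof.
move=> Hn; rewrite /lz_len; apply: (big_ind (fun x => x <= M)) => //.
  by move=> x y Hx Hy; rewrite geq_max Hx Hy.
move=> l Hl; rewrite leqNgt; apply/negP => HM.
by move: Hn; rewrite (@qual_closed z q l M.+1 Hl) //; lia.
Qed.

Lemma len_lb z q l : 0 < l <= size z - q -> lz_qualifies z q l -> l <= lz_len z q.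
Proof.
move=> Hl Hq; rewrite /lz_len; apply: (leq_bigmax_seq (F := id)) => //.
by rewrite mem_index_iota; lia.
Qed.

Lemma len_pos z q : q < size z -> 0 < lz_len z q.
Proof.
move=> Hq; apply: (@leq_trans 1) => //; apply: len_lb; first by lia.
by rewrite /lz_qualifies eqxx.
Qed.


Definition sf z i := lz_starts_from z i (size z - i).

Lemma sf_fuel2 z f : forall i g, size z - i <= f -> size z - i <= g ->
  lz_starts_from z i f = lz_starts_from z i g.
Proof.
elim: f => [|f IH] i g Hf Hg.
  by case: g Hg => [|g] Hg //=; have -> : i < size z = false by lia.
case: g Hg => [|g] Hg /=.
  by have -> : i < size z = false by lia.
case: ifP => Hi //; have Hp := @len_pos z i Hi.
by rewrite (IH _ g) //; lia.
Qed.

Lemma sf_fuel z i f : size z - i <= f -> lz_starts_from z i f = sf z i.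
Proof. by move=> H; apply: sf_fuel2. Qed.

Lemma sf_step z i : i < size z -> sf z i = i :: sf z (i + lz_len z i).
Proof.
move=> Hi; have Hp := @len_pos z i Hi.
rewrite {1}/sf; have -> : size z - i = (size z - i).-1.+1 by lia.
by rewrite /= Hi sf_fuel //; lia.
Qed.

Lemma sf_end z i : size z <= i -> sf z i = [::].
Proof. by move=> Hi; rewrite /sf; have -> : size z - i = 0 by lia. Qed.

Lemma sf_ge z i p : p \in sf z i -> i <= p.
Proof.
rewrite /sf; move: (size z - i) => f; elim: f i => [|f IH] i //=.
case: ifP => // _; rewrite inE => /orP [/eqP -> //|/IH]; lia.
Qed.

Lemma sf_chain z p B : B <= size z ->
  (forall q, p <= q < B -> q + lz_len z q <= B) -> p <= B ->
  exists Q, sf z p = Q ++ sf z B /\ all (fun x => x < B) Q.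
Proof.
move=> HB H Hp; have [n Hn] : exists n, B - p <= n by exists (B - p).
elim: n p Hn H Hp => [|n IH] p Hn H Hp.
  have -> : p = B by lia.
  by exists [::].
case: (eqVneq p B) => [->|HpB]; first by exists [::].
have Hpb : p < B by lia.
have Hpz : p < size z by lia.
have Hpos := @len_pos z p Hpz.
have Hq : p + lz_len z p <= B by apply: H; lia.
have [Q [E HQ]] : exists Q, sf z (p + lz_len z p) = Q ++ sf z B /\ all (fun x => x < B) Q.
  by apply: IH; [lia | move=> q Hq'; apply: H; lia | lia].
exists (p :: Q); by rewrite sf_step // E /= Hpb.
Qed.
End Gen.

Lemma nth_flat10 (T : Type) (x0 : T) (X : seq (seq T)) m o :
  all (fun s => size s == 10) X -> o < 10 ->
  nth x0 (flatten X) (m * 10 + o) = nth x0 (nth [::] X m) o.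
Proof.
elim: X m => [|s X IH] m /=; first by move=> *; rewrite !nth_nil.
move=> /andP [/eqP Hs HX] Ho; rewrite nth_cat Hs.
case: m => [|m]; first by rewrite mul0n add0n Ho.
have -> : (m.+1 * 10 + o < 10) = false by lia.
have -> : m.+1 * 10 + o - 10 = m * 10 + o by lia.
by rewrite IH.
Qed.

Lemma size_flat10 (T : Type) (X : seq (seq T)) :
  all (fun s => size s == 10) X -> size (flatten X) = size X * 10.
Proof.
elim: X => [|s X IH] //= /andP [/eqP Hs HX]; rewrite size_cat Hs IH //; lia.
Qed.

Section Graph.
Variable V : finType.
Variable adj : V -> seq V.

Lemma e_expl v w : e_str adj v w =
  [:: sprime v; sbase (cpred adj v w); sprime v; sbase (cpred adj v w);
      sprime v; sbase (cpred adj v w); sprime v; sbase (cpred adj v w);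
      sprime v; sbase w].
Proof. by []. Qed.

Lemma s_expl (v : V) : s_str v =
  [:: sbase v; sbase v; sbase v; sbase v; sprime v; sprime v; sprime v; sprime v;
      sprime v; sdollar v].
Proof. by []. Qed.

Lemma pred_mod i d : i < d -> (i + d).-1 %% d = if i == 0 then d.-1 else i.-1.
Proof.
case: i => [|i] Hi /=; first by rewrite add0n modn_small //; lia.
by rewrite modnDr modn_small //; lia.
Qed.

Lemma cpred_idx v w : w \in adj v ->
  cpred adj v w = nth v (adj v) (if index w (adj v) == 0 then (size (adj v)).-1
                                 else (index w (adj v)).-1).
Proof. by move=> Hw; rewrite /cpred pred_mod // index_mem. Qed.

Lemma cpred_mem v w : w \in adj v -> cpred adj v w \in adj v.
Proof.
move=> Hw; rewrite cpred_idx //; apply: mem_nth.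
have Hi : index w (adj v) < size (adj v) by rewrite index_mem.
move: Hi; set d := size (adj v) => Hi. case: ifP => _; lia.
Qed.

Lemma cpred_inj v u w : uniq (adj v) -> u \in adj v -> w \in adj v ->
  cpred adj v u = cpred adj v w -> u = w.
Proof.
move=> Hu Hmu Hmw; rewrite !cpred_idx // => /eqP.
have Hiu : index u (adj v) < size (adj v) by rewrite index_mem.
have Hiw : index w (adj v) < size (adj v) by rewrite index_mem.
move: Hiu Hiw; set d := size (adj v) => Hiu Hiw.
rewrite nth_uniq //; last 2 first.
- by rewrite -/d; case: ifP => _; lia.
- by rewrite -/d; case: ifP => _; lia.
move=> /eqP E.
have Ei : index u (adj v) = index w (adj v).
  by move: E; do 2 case: ifP => /eqP; lia.
by rewrite -(nth_index v Hmu) -(nth_index v Hmw) Ei.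
Qed.

Lemma cpred_neq v w : uniq (adj v) -> size (adj v) != 1 -> w \in adj v ->
  cpred adj v w != w.
Proof.
move=> Hu Hs Hmw; rewrite cpred_idx //.
have Hiw : index w (adj v) < size (adj v) by rewrite index_mem.
move: Hiw Hs; set d := size (adj v) => Hiw Hs.
rewrite -[X in _ != X](nth_index v Hmw) nth_uniq //; last by rewrite -/d; case: ifP => _; lia.
by case: ifP => /eqP; lia.
Qed.
End Graph.

Ltac snd_contra H := let E := fresh in pose proof (f_equal snd H) as E;
  rewrite /= /sbase /sprime /sdollar /= in E; discriminate E.

Section Batch.
Variable V : finType.
Variable adj : V -> seq V.
Hypothesis HG : graph_ok adj.
Variable X : seq (seq (sym V)).
Hypothesis HU : uniq X.
Hypothesis HS : forall s, s \in X -> inSH adj s.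

Lemma all10 : all (fun s => size s == 10) X.
Proof. by apply/allP => s /HS [[x ->]|[x [u [_ ->]]]]. Qed.

Lemma sizez : size (flatten X) = size X * 10.
Proof. exact: size_flat10 all10. Qed.

Lemma nthz x0 m o : o < 10 ->
  nth x0 (flatten X) (m * 10 + o) = nth x0 (nth [::] X m) o.
Proof. by move=> Ho; rewrite nth_flat10 // all10. Qed.

Lemma nthX_in m : m < size X -> inSH adj (nth [::] X m).
Proof. by move=> Hm; apply: HS; rewrite mem_nth. Qed.

Lemma pos_uniq m m' : m < size X -> m' < size X ->
  nth [::] X m = nth [::] X m' -> m = m'.
Proof. by move=> Hm Hm' /eqP; rewrite nth_uniq // => /eqP. Qed.

Lemma locate i : i < size (flatten X) ->
  exists m o, [/\ i = m * 10 + o, o < 10 & m < size X].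
Proof.
rewrite sizez => Hi; exists (i %/ 10), (i %% 10); split.
- by rewrite {1}(divn_eq i 10).
- by rewrite ltn_mod.
- by rewrite ltn_divLR.
Qed.

Lemma VY x0 v w n1 : n1 < size X -> nth [::] X n1 = e_str adj v w -> w \in adj v ->
  forall i, i.+1 < size (flatten X) ->
  nth x0 (flatten X) i = sprime v -> nth x0 (flatten X) i.+1 = sbase (cpred adj v w) ->
  (n1 * 10 <= i < n1 * 10 + 10) \/
  exists m, i = m * 10 + 8 /\ nth [::] X m = e_str adj v (cpred adj v w).
Proof.
move=> Hn1 En1 Hw i Hi H1 H2.
have [m [o [Ei Ho Hm]]] := locate i (ltnW Hi).
rewrite Ei nthz // in H1.
have H2' : o < 9 -> nth x0 (nth [::] X m) o.+1 = sbase (cpred adj v w).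
  by move=> Ho9; rewrite -nthz // -H2 Ei addnS.
case: (nthX_in m Hm) => [[x Ex]|[x [u [Hu Ex]]]]; rewrite Ex ?s_expl ?e_expl in H1 H2'.
  case: o Ho H1 H2' {Ei} => [|[|[|[|[|[|[|[|[|[|o]]]]]]]]]] //= _ H1 H2';
  try snd_contra H1; have := H2' isT => H2''; snd_contra H2''.
case: o Ho H1 H2' Ei => [|[|[|[|[|[|[|[|[|[|o]]]]]]]]]] //= _ H1 H2' Ei;
  try snd_contra H1; have := H2' isT => H2''; rewrite /sprime /sbase in H1 H2'';
  case: H1 => Exv; case: H2'' => E; subst x.
all: try (by right; exists m; split => //; rewrite Ex -E).
all: left; have Euw : u = w by apply: (cpred_inj V adj v u w (proj1 HG v)).
all: have Em : m = n1 by apply: (pos_uniq m n1) => //; rewrite En1 Ex Euw.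
all: lia.
Qed.

Lemma Dollar (x0 : sym V) i x : i < size (flatten X) -> nth x0 (flatten X) i = sdollar x ->
  exists m, i = m * 10 + 9 /\ nth [::] X m = s_str x.
Proof.
move=> Hi H1.
have [m [o [Ei Ho Hm]]] := locate i Hi.
rewrite Ei nthz // in H1.
case: (nthX_in m Hm) => [[x' Ex]|[x' [u [Hu Ex]]]]; rewrite Ex ?s_expl ?e_expl in H1;
  case: o Ho H1 Ei => [|[|[|[|[|[|[|[|[|[|o]]]]]]]]]] //= _ H1 Ei;
  try snd_contra H1.
rewrite /sdollar in H1; case: H1 => E; subst x'.
by exists m.
Qed.

Lemma S_step (x0 : sym V) n x : n < size X -> nth [::] X n = s_str x ->
  exists Q, sf _ (flatten X) (n * 10) = Q ++ sf _ (flatten X) (n * 10 + 10) /\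
            all (fun p => p < n * 10 + 10) Q.
Proof.
move=> Hn En.
have Hsz := sizez.
apply: sf_chain; [by rewrite sizez; lia | | lia].
move=> q /andP [Hq1 Hq2].
suff : lz_len (flatten X) q <= n * 10 + 10 - q by lia.
apply: len_ub; apply/negP => Hqual.
have [|j [Hj Hjs Hk]] := qual_elim _ x0 _ _ _ _ Hqual; first by lia.
have Hk' := Hk (n * 10 + 10 - q).-1 ltac:(lia).
have E9 : nth x0 (flatten X) (q + (n * 10 + 10 - q).-1) = sdollar x.
  have -> : q + (n * 10 + 10 - q).-1 = n * 10 + 9 by lia.
  by rewrite nthz // En.
rewrite E9 in Hk'.
have [|m [Em EXm]] := Dollar x0 _ x _ Hk'; first by lia.
have Hm : m < size X by lia.
have : m = n by apply: (pos_uniq m n) => //; rewrite En EXm.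
lia.
Qed.

Section Estr.
Variables (x0 : sym V) (v w : V) (n1 : nat).
Hypothesis Hn1 : n1 < size X.
Hypothesis En1 : nth [::] X n1 = e_str adj v w.
Hypothesis Hw : w \in adj v.

Local Notation z := (flatten X).
Local Notation a := (n1 * 10).
Local Notation b := (n1 * 10 + 10).
Local Notation y := (cpred adj v w).

Lemma Hy : y \in adj v.
Proof. exact: cpred_mem. Qed.
Lemma Hyw : y != w.
Proof. by apply: cpred_neq => //; [exact: (proj1 HG v) | exact: (proj2 (proj2 HG) v)]. Qed.
Lemma Hyy : cpred adj v y != y.
Proof. by apply: cpred_neq => //; [exact: (proj1 HG v) | exact: (proj2 (proj2 HG) v) | exact: Hy]. Qed.

Lemma Hbz : b <= size z.
Proof. rewrite sizez; lia. Qed.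

Lemma zpat k : k <= 8 -> nth x0 z (a + k) = if odd k then sbase y else sprime v.
Proof.
move=> Hk; rewrite nthz; last by lia.
by rewrite En1 e_expl; case: k Hk => [|[|[|[|[|[|[|[|[|k]]]]]]]]].
Qed.

Lemma z9 : nth x0 z (a + 9) = sbase w.
Proof. by rewrite nthz // En1 e_expl. Qed.

Lemma notw k : k <= 8 -> nth x0 z (a + k) != sbase w.
Proof.
move=> Hk; rewrite zpat //; case: ifP => _; rewrite /sbase /sprime xpair_eqE ?andbF ?andbT //.
by apply/negP => /eqP E; move: Hyw; rewrite E eqxx.
Qed.

Lemma copy_in j t l : a <= j -> j + 2 * t + l <= a + 9 ->
  forall k, k < l -> nth x0 z (j + k) = nth x0 z (j + 2 * t + k).
Proof.
move=> Hj Hl k Hk.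
have -> : j + k = a + (j - a + k) by lia.
have -> : j + 2 * t + k = a + (j - a + k + 2 * t) by lia.
rewrite !zpat; try lia.
by rewrite (oddD (j - a + k)) oddM /= addbF.
Qed.

Lemma NA q : a <= q <= a + 4 -> ~~ lz_qualifies z q (b - q).+1.
Proof.
move=> /andP [Hq1 Hq2]; apply/negP => Hqual.
have Hsz := Hbz.
have [|j [Hjq Hjs Hk]] := qual_elim _ x0 _ _ _ _ Hqual; first by lia.
set j' := j + (a + 4 - q).
have E : forall k, k < 6 -> nth x0 z (j' + k) = nth x0 z (a + (4 + k)).
  move=> k Hk6; have := Hk (a + 4 - q + k) ltac:(lia).
  rewrite (_ : j + (a + 4 - q + k) = j' + k); last by rewrite /j'; lia.
  by rewrite (_ : q + (a + 4 - q + k) = a + (4 + k)) //; lia.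
have E0 := E 0 isT; have E1 := E 1 isT; have E2 := E 2 isT; have E3 := E 3 isT.
have E5 := E 5 isT.
rewrite zpat //= addn0 in E0; rewrite zpat //= in E1; rewrite zpat //= in E2; rewrite zpat //= in E3; rewrite z9 in E5.
have Hj'1 : j'.+1 < size z by rewrite /j'; lia.
have [HA|[m [Em EXm]]] := VY x0 v w n1 Hn1 En1 Hw j' Hj'1 E0 ltac:(by rewrite -E1 addn1).
  have := notw (j' - a + 5) ltac:(rewrite /j' in HA *; lia).
  by rewrite (_ : a + (j' - a + 5) = j' + 5) ?E5 ?eqxx //; lia.
have Hj'3 : (j' + 2).+1 < size z by rewrite /j'; lia.
have [HA|[m' [Em' _]]] := VY x0 v w n1 Hn1 En1 Hw (j' + 2) Hj'3 E2
    ltac:(by rewrite -E3; congr nth; lia).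
  have := notw 3 isT.
  by rewrite (_ : a + 3 = j' + 5) ?E5 ?eqxx //; rewrite /j' in Em HA *; lia.
lia.
Qed.

Lemma N3 : (forall m, m.+1 = n1 -> nth [::] X m <> e_str adj v y) ->
  ~~ lz_qualifies z a 5.
Proof.
move=> Hnot; apply/negP => Hqual.
have Hsz := Hbz.
have [|j [Hja Hjs Hk]] := qual_elim _ x0 _ _ _ _ Hqual; first by lia.
have E0 := Hk 0 isT; have E1 := Hk 1 isT; have E2 := Hk 2 isT; have E3 := Hk 3 isT.
rewrite zpat //= !addn0 in E0; rewrite zpat //= in E1; rewrite zpat //= in E2; rewrite zpat //= in E3.
have [HA|[m [Em EXm]]] := VY x0 v w n1 Hn1 En1 Hw j ltac:(lia) E0
    ltac:(by rewrite -E1 addn1).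
  lia.
have [HA|[m' [Em' _]]] := VY x0 v w n1 Hn1 En1 Hw (j + 2) ltac:(lia) E2
    ltac:(by rewrite -E3; congr nth; lia).
  by apply: (Hnot m) => //; lia.
lia.
Qed.

Lemma N4 : lz_qualifies z (a + 1) 4 -> 0 < n1 /\ nth x0 z (a - 1) = sbase y.
Proof.
move=> Hqual.
have Hsz := Hbz.
have [|j [Hja Hjs Hk]] := qual_elim _ x0 _ _ _ _ Hqual; first by lia.
have E0 := Hk 0 isT; have E1 := Hk 1 isT; have E2 := Hk 2 isT.
rewrite !addn0 zpat //= in E0.
rewrite -addnA zpat //= in E1; rewrite -addnA zpat //= in E2.
have [HA|[m [Em EXm]]] := VY x0 v w n1 Hn1 En1 Hw (j + 1) ltac:(lia) E1
    ltac:(by rewrite -E2; congr nth; lia).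
  case: (eqVneq j a) => [Eja|Hja'].
    by move: E0; rewrite Eja -[a]addn0 zpat.
  split; first by lia.
  by rewrite (_ : a - 1 = j) //; lia.
have : nth x0 z (m * 10 + 7) = sbase (cpred adj v y) by rewrite nthz // EXm e_expl.
rewrite (_ : m * 10 + 7 = j); last by lia.
rewrite E0 /sbase => -[] E.
by move: Hyy; rewrite -E eqxx.
Qed.

Lemma copy_qual j t : a <= j -> 0 < t -> j + 2 * t <= a + 8 ->
  lz_qualifies z (j + 2 * t) (b - (j + 2 * t)).
Proof.
move=> Hj Ht Hjt; have Hsz := Hbz.
apply: (qual_intro _ x0 _ _ _ j); try (rewrite ?sizez; lia).
move=> k Hk; apply: (copy_in j t (b - (j + 2 * t)).-1) => //; lia.
Qed.

Lemma lenq q : a + 2 <= q <= a + 4 -> lz_len z q = b - q.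
Proof.
move=> /andP [Hq1 Hq2]; have Hsz := Hbz.
apply/eqP; rewrite eqn_leq; apply/andP; split.
  by apply: len_ub; apply: NA; lia.
apply: len_lb; first by rewrite ?sizez; lia.
have [->|[->|->]] : q = a + 2 * 1 \/ q = (a + 1) + 2 * 1 \/ q = a + 2 * 2 by lia.
- by apply: copy_qual; lia.
- by apply: copy_qual; lia.
- by apply: copy_qual; lia.
Qed.

Lemma sfq q : a + 2 <= q <= a + 4 -> sf _ z q = q :: sf _ z b.
Proof.
move=> Hq; have Hsz := Hbz.
rewrite sf_step; last by rewrite ?sizez; lia.
by rewrite lenq // (_ : q + (b - q) = b) //; lia.
Qed.

Lemma len_case1 m : m.+1 = n1 -> nth [::] X m = e_str adj v y -> lz_len z a = 10.
Proof.
move=> Em EXm; have Hsz := Hbz.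
apply/eqP; rewrite eqn_leq; apply/andP; split.
  have H := len_ub _ z a (b - a) (NA a ltac:(lia)).
  by rewrite (_ : b - a = 10) in H; lia.
apply: len_lb; first by rewrite ?sizez; lia.
apply: (qual_intro _ x0 _ _ _ (a - 2)); try (rewrite ?sizez; lia).
move=> k Hk /=.
case: k Hk => [|[|k]] Hk.
- rewrite (_ : a - 2 + 0 = m * 10 + 8); last by lia.
  by rewrite nthz // EXm e_expl zpat.
- rewrite (_ : a - 2 + 1 = m * 10 + 9); last by lia.
  by rewrite nthz // EXm e_expl zpat.
- rewrite (_ : a - 2 + k.+2 = a + k); last by lia.
  rewrite (_ : a + k.+2 = a + 2 * 1 + k); last by lia.
  by apply: (copy_in a 1 7) => //; lia.
Qed.

Lemma len_C1y : 0 < n1 -> nth x0 z (a - 1) = sbase y -> lz_len z (a + 1) = 9.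
Proof.
move=> Hn E; have Hsz := Hbz.
apply/eqP; rewrite eqn_leq; apply/andP; split.
  have H := len_ub _ z (a + 1) (b - (a + 1)) (NA (a + 1) ltac:(lia)).
  by rewrite (_ : b - (a + 1) = 9) in H; lia.
apply: len_lb; first by rewrite ?sizez; lia.
apply: (qual_intro _ x0 _ _ _ (a - 1)); try (rewrite ?sizez; lia).
move=> k Hk /=.
case: k Hk => [|k] Hk.
- by rewrite addn0 E addn0 zpat.
- rewrite (_ : a - 1 + k.+1 = a + k); last by lia.
  rewrite (_ : a + 1 + k.+1 = a + 2 * 1 + k); last by lia.
  by apply: (copy_in a 1 7) => //; lia.
Qed.

Lemma Cs m : m.+1 = n1 -> nth [::] X m = s_str v -> lz_qualifies z a 2.
Proof.
move=> Em EXm; have Hsz := Hbz.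
apply: (qual_intro _ x0 _ _ _ (a - 2)); try (rewrite ?sizez; lia).
move=> k Hk; rewrite (_ : k = 0); last by lia.
rewrite (_ : a - 2 + 0 = m * 10 + 8); last by lia.
by rewrite nthz // EXm s_expl zpat.
Qed.

Lemma s_ne_e (x u : V) : s_str x <> e_str adj v u.
Proof. by rewrite s_expl e_expl /sbase /sprime => -[]. Qed.

Lemma E_step : exists Q, sf _ z a = Q ++ sf _ z b /\
  all (fun p => a <= p < b) Q /\ (exists Q', Q = a :: Q') /\
  ((exists m, m.+1 = n1 /\ nth [::] X m = e_str adj v y) -> size Q = 1) /\
  ((exists m, m.+1 = n1 /\ nth [::] X m = s_str v) -> size Q = 2) /\
  ((forall m, m.+1 = n1 -> nth [::] X m <> e_str adj v y) -> 1 < size Q).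
Proof.
have Hsz := Hbz.
have Ha : a < size z by rewrite ?sizez; lia.
have [[m [Em EXm]]|Hn] : (exists m, m.+1 = n1 /\ nth [::] X m = e_str adj v y) \/
    (forall m, m.+1 = n1 -> nth [::] X m <> e_str adj v y).
  case: (posnP n1) => [n0|npos]; first by right => m; lia.
  case: (eqVneq (nth [::] X n1.-1) (e_str adj v y)) => [E|NE].
    by left; exists n1.-1; split => //; lia.
  by right => m Hm; rewrite (_ : m = n1.-1); [exact/eqP | lia].
  exists [:: a]; split.
    by rewrite sf_step // (len_case1 m) // (_ : a + 10 = b) //; lia.
  split; first by rewrite /= leqnn /=; lia.
  split; first by exists [::].
  split; first by [].
  split.
    move=> [m' [Em' EXm']]; have Emm : m = m' by lia.
    subst m'; exfalso; apply: (s_ne_e v y); by rewrite -EXm'.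
  by move=> H; exfalso; exact: (H m Em EXm).
have HL4 : lz_len z a <= 4 by apply: len_ub; exact: N3.
have HL1 : 0 < lz_len z a by exact: len_pos.
case: (leqP 2 (lz_len z a)) => HL2.
  exists [:: a; a + lz_len z a]; split.
    by rewrite sf_step // sfq //; lia.
  split; first by rewrite /= !leqnn /=; lia.
  split; first by eexists.
  split; first by move=> [m [Em EXm]]; exfalso; exact: (Hn m Em EXm).
  by split.
have HL : lz_len z a = 1 by lia.
have Hns : ~ (exists m, m.+1 = n1 /\ nth [::] X m = s_str v).
  move=> [m [Em EXm]].
  have := len_lb _ z a 2 ltac:(rewrite ?sizez; lia) (Cs m Em EXm); lia.
case: (boolP (lz_qualifies z (a + 1) 4)) => Hq4.
  have [Hn0 Ey] := N4 Hq4.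
  exists [:: a; a + 1]; split.
    rewrite sf_step // HL sf_step; last by rewrite ?sizez; lia.
    by rewrite len_C1y // (_ : a + 1 + 9 = b) //; lia.
  split; first by rewrite /= !leqnn /=; lia.
  split; first by eexists.
  split; first by move=> [m [Em EXm]]; exfalso; exact: (Hn m Em EXm).
  by split.
have HL'3 : lz_len z (a + 1) <= 3 by apply: len_ub.
have HL'1 : 0 < lz_len z (a + 1) by apply: len_pos; rewrite ?sizez; lia.
exists [:: a; a + 1; a + 1 + lz_len z (a + 1)]; split.
  rewrite sf_step // HL sf_step; last by rewrite ?sizez; lia.
  by rewrite sfq //; lia.
split; first by rewrite /= !leqnn /=; lia.
split; first by eexists.
split; first by move=> [m [Em EXm]]; exfalso; exact: (Hn m Em EXm).
by split.
Qed.

End Estr.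
End Batch.

Lemma prefix_inv (V : finType) (adj : V -> seq V) (HG : graph_ok adj)
  (X : seq (seq (sym V))) (HU : uniq X) (HS : forall s, s \in X -> inSH adj s)
  (x0 : sym V) n : n <= size X ->
  exists P, lz_starts (flatten X) = P ++ sf _ (flatten X) (n * 10) /\
            all (fun p => p < n * 10) P.
Proof.
elim: n => [|n IH] Hn.
  by exists [::]; rewrite /lz_starts /sf subn0.
have [P [EP HP]] := IH (ltnW Hn).
have [Q [EQ HQ]] : exists Q, sf _ (flatten X) (n * 10) = Q ++ sf _ (flatten X) (n * 10 + 10) /\
            all (fun p => p < n * 10 + 10) Q.
  case: (nthX_in V adj X HS n Hn) => [[x Ex]|[x [u [Hu Ex]]]].
    exact: (S_step V adj X HU HS x0 n x Hn Ex).
  have [Q [E1 [E2 _]]] := E_step V adj HG X HU HS x0 x u n Hn Ex Hu.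
  exists Q; split => //; apply/allP => p /(allP E2) /andP [_ ->] //.
exists (P ++ Q); split.
  by rewrite EP EQ catA mulSn addnC.
rewrite all_cat; apply/andP; split.
  by apply/allP => p /(allP HP); rewrite mulSn; lia.
by rewrite mulSn addnC.
Qed.

Lemma count0_lt (P : seq nat) a b : all (fun p => p < a) P ->
  count (fun p => a <= p < b) P = 0.
Proof. by elim: P => //= p P IH /andP [Hp HP]; rewrite IH // addn0; case: leqP Hp. Qed.

Lemma count0_ge (P : seq nat) a b : (forall p, p \in P -> b <= p) ->
  count (fun p => a <= p < b) P = 0.
Proof.
elim: P => //= p P IH H; rewrite IH; last by move=> q Hq; apply: H; rewrite inE Hq orbT.
have := H p (mem_head _ _); case: (a <= p < b) / andP => //; lia.
Qed.

Theorem lemma7 (V : finType) (adj : V -> seq V) (HG : graph_ok adj)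
    (v w : V) (Hvw : w \in adj v) (X1 X2 : seq (seq (sym V))) :
  is_batch adj (X1 ++ e_str adj v w :: X2) ->
  let z := flatten (X1 ++ e_str adj v w :: X2) in
  let a := size (flatten X1) in
  let b := a + size (e_str adj v w) in
  let y := cpred adj v w in
  [/\ (forall X0, X1 = rcons X0 (e_str adj v y) -> lz_union_of z a b 1),
      (forall X0, X1 = rcons X0 (s_str v) -> lz_union_of z a b 2)
    & ((forall X0, X1 <> rcons X0 (e_str adj v y)) ->
       (forall X0, X1 <> rcons X0 (s_str v)) ->
       exists2 k, 2 <= k & lz_union_of z a b k)].
Proof.
move=> [HU HS] z a b y.
set X := X1 ++ e_str adj v w :: X2.
have x0 : sym V := sbase v.
have En1 : nth [::] X (size X1) = e_str adj v w by rewrite /X nth_cat ltnn subnn.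
have Hn1 : size X1 < size X by rewrite /X size_cat /=; lia.
have Ha : a = size X1 * 10.
  apply: size_flat10; apply/allP => s Hs.
  have : s \in X by rewrite /X mem_cat Hs.
  by move/HS => [[x ->]|[x [u [_ ->]]]].
have Hb : b = size X1 * 10 + 10 by rewrite /b Ha.
have [P [EP HP]] := prefix_inv V adj HG X HU HS x0 (size X1) (ltnW Hn1).
have [Q [EQ [HQ [[Q' EQ'] [C1 [C2 C3]]]]]] := E_step V adj HG X HU HS x0 v w (size X1) Hn1 En1 Hvw.
have Hbz : b <= size z by rewrite /z (sizez V adj X HS) Hb; lia.
have Hun : lz_union_of z a b (size Q).
  split; first by rewrite /b; lia.
  split.
    by rewrite /lz_boundary /z EP Ha EQ EQ' mem_cat mem_head orbT.
  split.
    rewrite /lz_boundary; case: (ltnP b (size z)) => Hbz'.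
      by rewrite /z EP EQ -Hb sf_step // !mem_cat mem_head !orbT.
    by rewrite (_ : b = size z) ?eqxx ?orbT //; lia.
  rewrite /z EP EQ -Hb !count_cat count0_lt; last by rewrite Ha.
  rewrite (count0_ge (sf _ (flatten X) b)); last by move=> p Hp; apply: (sf_ge _ _ _ p Hp).
  rewrite add0n addn0.
  by apply/eqP; rewrite -all_count Ha Hb.
have Hlast : forall t X0, X1 = rcons X0 t -> (size X0).+1 = size X1 /\ nth [::] X (size X0) = t.
  move=> t X0 E; rewrite E size_rcons; split => //.
  by rewrite /X E -cats1 -catA nth_cat ltnn subnn.
split.
- move=> X0 HX0; have [E1 E2] := Hlast _ _ HX0.
  by rewrite -(C1 (ex_intro _ (size X0) (conj E1 E2))).
- move=> X0 HX0; have [E1 E2] := Hlast _ _ HX0.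
  by rewrite -(C2 (ex_intro _ (size X0) (conj E1 E2))).
- move=> Hne _; exists (size Q) => //; apply: C3 => m Hm Em.
  apply: (Hne (take m X1)).
  have Hm1 : m < size X1 by lia.
  have Em' : nth [::] X1 m = e_str adj v y by rewrite -Em /X nth_cat Hm1.
  by rewrite -Em' -take_nth // Hm take_size.
Qed.
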